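(* For $i=1,2$ let $G_i$ be an $r_i$-regular graph with $n_i$ vertices. (a) If both $G_1$ and $G_2$ admit balanced labellings and $r_1r_2+r_1+r_2$ is coprime to $n_1n_2$, then $G_1\boxtimes G_2$ is $\mathbb{Z}_{n_1n_2}$-distance antimagic. (b) If $G_1$ is $\mathbb{Z}_{n_1}$-distance magic, $G_2$ is $\mathbb{Z}_{n_2}$-distance magic, $\gcd(r_1,n_2)=1$ and $\gcd(r_2,n_1)=1$, then $G_1\boxtimes G_2$ is $\mathbb{Z}_{n_1n_2}$-distance antimagic.
   Context: The strong product $G_1\boxtimes G_2$ has vertex set $V(G_1)\times V(G_2)$, with distinct $(x_1,x_2),(y_1,y_2)$ adjacent iff for each $i$ either $x_i=y_i$ or $x_iy_i\in E(G_i)$. For an $r$-regular graph $G$ with $n$ vertices, a balanced labelling is a bijection $f:V(G)\to\mathbb{Z}_n$ with $\sum_{y\in N(x)}f(y)\equiv rf(x)\pmod n$ for all $x$ ($N(x)$ the open neighbourhood). For a graph $G$ with $n$ vertices and a bijection $f:V(G)\to\mathbb{Z}_n$, the weight is $w_f(x)=\sum_{y\in N(x)} f(y)$ mod $n$; $f$ is $\mathbb{Z}_n$-distance antimagic if the weights are pairwise distinct, and $\mathbb{Z}_n$-distance magic if all weights are equal. $G$ is $\mathbb{Z}_n$-distance antimagic (resp. magic) if it admits such a labelling. *)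

(* Defs.v *)
From mathcomp Require Import all_boot.
Set Implicit Arguments. Unset Strict Implicit. Unset Printing Implicit Defensive.

Definition simple_graph (T : finType) (e : rel T) : Prop :=
  symmetric e /\ irreflexive e.

Definition nbhd (T : finType) (e : rel T) (x : T) : {set T} := [set y | e x y].

Definition regular (T : finType) (e : rel T) (r : nat) : Prop :=
  forall x, #|nbhd e x| = r.

Definition strong_prod (T1 T2 : finType) (e1 : rel T1) (e2 : rel T2) :
  rel (T1 * T2)%type :=
  fun x y => [&& x != y, (x.1 == y.1) || e1 x.1 y.1 & (x.2 == y.2) || e2 x.2 y.2].

(* Weight w_f(x) = sum of labels over N(x), as a natural number
   (to be read modulo n). Labels in Z_n are represented by 'I_n. *)
Definition weight (T : finType) (e : rel T) (n : nat) (f : T -> 'I_n) (x : T) : nat :=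
  \sum_(y in nbhd e x) (f y : nat).

Definition balanced_labelling (T : finType) (e : rel T) (r n : nat)
  (f : T -> 'I_n) : Prop :=
  bijective f /\ forall x, weight e f x = r * f x %[mod n].

Definition has_balanced_labelling (T : finType) (e : rel T) (r : nat) : Prop :=
  exists f : T -> 'I_#|T|, balanced_labelling e r f.

Definition Zn_distance_antimagic (T : finType) (e : rel T) (n : nat) : Prop :=
  exists f : T -> 'I_n, bijective f /\
    forall x y, weight e f x = weight e f y %[mod n] -> x = y.

Definition Zn_distance_magic (T : finType) (e : rel T) (n : nat) : Prop :=
  exists f : T -> 'I_n, bijective f /\
    forall x y, weight e f x = weight e f y %[mod n].

(* Main.v *)
Require Import Defs.
From mathcomp Require Import all_boot all_algebra zify ring.

Lemma key (T1 T2 : finType) (e1 : rel T1) (e2 : rel T2) r1 r2 n2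
  (f1 : T1 -> nat) (f2 : T2 -> nat) (x : T1 * T2) :
  simple_graph e1 -> simple_graph e2 -> regular e1 r1 -> regular e2 r2 ->
  \sum_(y in nbhd (strong_prod e1 e2) x) (n2 * f1 y.1 + f2 y.2) + (n2 * f1 x.1 + f2 x.2)
  = n2 * (r2+1) * (f1 x.1 + \sum_(y in nbhd e1 x.1) f1 y)
    + (r1+1) * (f2 x.2 + \sum_(y in nbhd e2 x.2) f2 y).
Proof.
move=> [s1 i1] [s2 i2] R1 R2.
case: x => x1 x2 /=.
set C1 := x1 |: nbhd e1 x1; set C2 := x2 |: nbhd e2 x2.
have E : nbhd (strong_prod e1 e2) (x1, x2) = setX C1 C2 :\ (x1, x2).
  apply/setP => -[y1 y2]; rewrite !inE /strong_prod /= xpair_eqE.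
  by rewrite (eq_sym x1) (eq_sym x2) (s1 x1) (s2 x2) xpair_eqE.
have n1N : x1 \notin nbhd e1 x1 by rewrite inE i1.
have n2N : x2 \notin nbhd e2 x2 by rewrite inE i2.
have xin : (x1, x2) \in setX C1 C2 by rewrite inE /= !inE !eqxx.
have H : \sum_(y in setX C1 C2) (n2 * f1 y.1 + f2 y.2) = (n2 * f1 x1 + f2 x2) + \sum_(y in setX C1 C2 :\ (x1,x2)) (n2 * f1 y.1 + f2 y.2).
  by rewrite (big_setD1 (x1,x2) xin).
rewrite E addnC -H /=.
have -> : \sum_(i | i \in setX C1 C2) (n2 * f1 i.1 + f2 i.2)
  = \sum_(i | (i.1 \in C1) && (i.2 \in C2)) (n2 * f1 i.1 + f2 i.2).
  by apply: eq_bigl => -[a b]; rewrite inE.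
rewrite -(pair_big_dep (fun a => a \in C1) (fun _ b => b \in C2) (fun a b => n2 * f1 a + f2 b)) /=.
under eq_bigr => a _ do rewrite big_split /= sum_nat_const.
rewrite big_split /= sum_nat_const -big_distrr /=.
rewrite /C1 /C2 !big_setU1 //= !cardsU1 n1N n2N /= R1 R2.
rewrite -big_distrr /=. nia.
Qed.
Import GRing.Theory.

Lemma cong_dvd {a b d : nat} : a = b %[mod d] -> (d%:Z %| (a%:Z - b%:Z)%R)%Z.
Proof. by move=> h; rewrite -eqz_mod_dvd; apply/eqP; rewrite !modz_nat h. Qed.

Lemma small_dvd (N a b : nat) : a < N -> b < N -> (N%:Z %| (a%:Z - b%:Z)%R)%Z -> a = b.
Proof.
move=> ha hb /dvdzP [k hk].
have : (k = 0 \/ 1 <= k \/ k <= -1)%R by lia.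
case=> [k0|[k1|k1]]; first (by subst; lia); nia.
Qed.

Lemma coprimez_natC (a N : nat) : coprime a N -> coprimez N%:Z a%:Z.
Proof. by rewrite coprimezE /= coprime_sym. Qed.

Local Open Scope ring_scope.

Lemma P_bal (T : finType) (e : rel T) (r s : nat) (f : T -> 'I_#|T|) :
  balanced_labelling e r f -> coprime (r * s + r + s) #|T| ->
  forall x y, (#|T|%:Z %| (s + 1)%N%:Z * ((f x + weight e f x)%N%:Z - (f y + weight e f y)%N%:Z)
                 - ((f x)%:Z - (f y)%:Z))%Z -> x = y.
Proof.
move=> [bf bw] cop x y h.
have hx := cong_dvd (bw x); have hy := cong_dvd (bw y).
have h2 : (#|T|%:Z %| (r * s + r + s)%N%:Z * ((f x)%:Z - (f y)%:Z))%Z.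
  have -> : (r * s + r + s)%N%:Z * ((f x)%:Z - (f y)%:Z) =
    ((s + 1)%N%:Z * ((f x + weight e f x)%N%:Z - (f y + weight e f y)%N%:Z)
                 - ((f x)%:Z - (f y)%:Z)) -
    ((weight e f x)%:Z - (r * f x)%N%:Z - ((weight e f y)%:Z - (r * f y)%N%:Z)) * (s+1)%N%:Z.
    rewrite !PoszD !PoszM; ring.
  apply: rpredB => //; apply: dvdz_mulr; exact: rpredB.
rewrite Gauss_dvdzr in h2; last exact: coprimez_natC.
apply: (bij_inj bf); apply: val_inj; exact: small_dvd h2.
Qed.

Lemma P_mag (T : finType) (e : rel T) (s : nat) (f : T -> 'I_#|T|) :
  bijective f -> (forall x y, weight e f x = weight e f y %[mod #|T|]) -> coprime s #|T| ->
  forall x y, (#|T|%:Z %| (s + 1)%N%:Z * ((f x + weight e f x)%N%:Z - (f y + weight e f y)%N%:Z)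
                 - ((f x)%:Z - (f y)%:Z))%Z -> x = y.
Proof.
move=> bf bw cop x y h.
have hxy := cong_dvd (bw x y).
have h2 : (#|T|%:Z %| s%:Z * ((f x)%:Z - (f y)%:Z))%Z.
  have -> : s%:Z * ((f x)%:Z - (f y)%:Z) =
    ((s + 1)%N%:Z * ((f x + weight e f x)%N%:Z - (f y + weight e f y)%N%:Z)
                 - ((f x)%:Z - (f y)%:Z)) -
    ((weight e f x)%:Z - (weight e f y)%:Z) * (s+1)%N%:Z.
    rewrite !PoszD; ring.
  apply: rpredB => //; exact: dvdz_mulr.
rewrite Gauss_dvdzr in h2; last exact: coprimez_natC.
apply: (bij_inj bf); apply: val_inj; exact: small_dvd h2.
Qed.

Definition hypA (N1 N2 r1 r2 Wx Wy a1 b1 a2 b2 w1x w1y w2x w2y : nat) : Prop :=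
  [/\ ((N1 * N2)%N%:Z %| Wx%:Z - Wy%:Z)%Z,
  (Wx + (N2 * a1 + a2) = N2 * (r2+1) * (a1 + w1x) + (r1+1) * (a2 + w2x))%N &
  (Wy + (N2 * b1 + b2) = N2 * (r2+1) * (b1 + w1y) + (r1+1) * (b2 + w2y))%N].

Lemma arith2 (N1 N2 r1 r2 Wx Wy a1 b1 a2 b2 w1x w1y w2x w2y : nat) :
  hypA N1 N2 r1 r2 Wx Wy a1 b1 a2 b2 w1x w1y w2x w2y ->
  (N2%:Z %| (r1 + 1)%N%:Z * ((a2 + w2x)%N%:Z - (b2 + w2y)%N%:Z) - (a2%:Z - b2%:Z))%Z.
Proof.
move=> [h /(congr1 Posz) kx /(congr1 Posz) ky].
move: kx ky; rewrite !PoszD !PoszM => kx ky.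
have -> : (r1 + 1)%N%:Z * ((a2 + w2x)%N%:Z - (b2 + w2y)%N%:Z) - (a2%:Z - b2%:Z) =
   (Wx%:Z - Wy%:Z) - N2%:Z * ((r2 + 1)%N%:Z * ((a1 + w1x)%N%:Z - (b1 + w1y)%N%:Z) - (a1%:Z - b1%:Z)).
  rewrite !PoszD; lia.
apply: rpredB; last exact: dvdz_mulr.
apply: dvdz_trans h; rewrite PoszM; exact: dvdz_mull.
Qed.

Lemma arith1 (N1 N2 r1 r2 Wx Wy a1 b1 a2 w1x w1y w2x : nat) :
  hypA N1 N2 r1 r2 Wx Wy a1 b1 a2 a2 w1x w1y w2x w2x -> (0 < N2)%N ->
  (N1%:Z %| (r2 + 1)%N%:Z * ((a1 + w1x)%N%:Z - (b1 + w1y)%N%:Z) - (a1%:Z - b1%:Z))%Z.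
Proof.
move=> [h /(congr1 Posz) kx /(congr1 Posz) ky] N2p.
move: kx ky; rewrite !PoszD !PoszM => kx ky.
move: h; rewrite PoszM.
have -> : Wx%:Z - Wy%:Z =
   ((r2 + 1)%N%:Z * ((a1 + w1x)%N%:Z - (b1 + w1y)%N%:Z) - (a1%:Z - b1%:Z)) * N2%:Z.
  rewrite !PoszD; nia.
rewrite dvdz_mul2r //; lia.
Qed.

Lemma prod_antimagic (T1 T2 : finType) (e1 : rel T1) (e2 : rel T2) (r1 r2 : nat)
  (f1 : T1 -> 'I_#|T1|) (f2 : T2 -> 'I_#|T2|) :
  simple_graph e1 -> simple_graph e2 -> regular e1 r1 -> regular e2 r2 ->
  bijective f1 -> bijective f2 ->
  (forall x y, (#|T1|%:Z %| (r2 + 1)%N%:Z * ((f1 x + weight e1 f1 x)%N%:Z - (f1 y + weight e1 f1 y)%N%:Z)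
                 - ((f1 x)%:Z - (f1 y)%:Z))%Z -> x = y) ->
  (forall x y, (#|T2|%:Z %| (r1 + 1)%N%:Z * ((f2 x + weight e2 f2 x)%N%:Z - (f2 y + weight e2 f2 y)%N%:Z)
                 - ((f2 x)%:Z - (f2 y)%:Z))%Z -> x = y) ->
  Zn_distance_antimagic (strong_prod e1 e2) (#|T1| * #|T2|).
Proof.
move=> sg1 sg2 R1 R2 b1 b2 P1 P2.
set N1 := #|T1|; set N2 := #|T2|.
have lt : forall p : T1 * T2, (N2 * f1 p.1 + f2 p.2 < N1 * N2)%N.
  move=> p; have := ltn_ord (f1 p.1); have := ltn_ord (f2 p.2); nia.
exists (fun p => Ordinal (lt p)); split.
  apply: inj_card_bij; last by rewrite card_ord card_prod.
  move=> [a b] [a' b'] /(congr1 val) /= h.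
  have hb : (f2 b = f2 b' :> nat).
    have := congr1 (modn^~ N2) h; rewrite /= !(mulnC N2) !modnMDl !modn_small //.
  have N2p : (0 < N2)%N by apply/card_gt0P; exists b.
  have ha : (f1 a = f1 a' :> nat).
    by move: h; rewrite hb => /addIn /eqP; rewrite eqn_pmul2l // => /eqP.
  by rewrite (bij_inj b1 (val_inj ha)) (bij_inj b2 (val_inj hb)).
move=> [x1 x2] [y1 y2] /cong_dvd h.
have kx : (weight (strong_prod e1 e2) (fun p => Ordinal (lt p)) (x1, x2) + (N2 * f1 x1 + f2 x2)
   = N2 * (r2+1) * (f1 x1 + weight e1 f1 x1) + (r1+1) * (f2 x2 + weight e2 f2 x2))%N
  := key _ _ e1 e2 r1 r2 N2 (fun a => nat_of_ord (f1 a)) (fun a => nat_of_ord (f2 a)) (x1, x2) sg1 sg2 R1 R2.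
have ky : (weight (strong_prod e1 e2) (fun p => Ordinal (lt p)) (y1, y2) + (N2 * f1 y1 + f2 y2)
   = N2 * (r2+1) * (f1 y1 + weight e1 f1 y1) + (r1+1) * (f2 y2 + weight e2 f2 y2))%N
  := key _ _ e1 e2 r1 r2 N2 (fun a => nat_of_ord (f1 a)) (fun a => nat_of_ord (f2 a)) (y1, y2) sg1 sg2 R1 R2.
have N2p : (0 < N2)%N by apply/card_gt0P; exists x2.
have ex2 := P2 _ _ (@arith2 _ _ _ _ _ _ _ _ _ _ _ _ _ _ (And3 h kx ky)); subst y2.
by rewrite (P1 _ _ (@arith1 _ _ _ _ _ _ _ _ _ _ _ _ (And3 h kx ky) N2p)).
Qed.

Theorem mainTheorem16 (T1 T2 : finType) (e1 : rel T1) (e2 : rel T2)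
  (r1 r2 n1 n2 : nat) :
  simple_graph e1 -> simple_graph e2 ->
  regular e1 r1 -> regular e2 r2 ->
  #|T1| = n1 -> #|T2| = n2 ->
  ((has_balanced_labelling e1 r1 -> has_balanced_labelling e2 r2 ->
    coprime (r1 * r2 + r1 + r2) (n1 * n2) ->
    Zn_distance_antimagic (strong_prod e1 e2) (n1 * n2))
  /\
   (Zn_distance_magic e1 n1 -> Zn_distance_magic e2 n2 ->
    coprime r1 n2 -> coprime r2 n1 ->
    Zn_distance_antimagic (strong_prod e1 e2) (n1 * n2))).
Proof.
move=> sg1 sg2 R1 R2 <- <-; split.
  move=> [f1 B1] [f2 B2]; rewrite coprimeMr => /andP [c1 c2].
  have c2' : coprime (r2 * r1 + r2 + r1) #|T2|.
    by rewrite (_ : (r2 * r1 + r2 + r1 = r1 * r2 + r1 + r2)%N) //; rewrite mulnC; lia.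
  exact: (@prod_antimagic _ _ e1 e2 r1 r2 f1 f2 sg1 sg2 R1 R2 (proj1 B1) (proj1 B2)
            (@P_bal _ e1 r1 r2 f1 B1 c1) (@P_bal _ e2 r2 r1 f2 B2 c2')).
move=> [f1 [B1 M1]] [f2 [B2 M2]] c1 c2.
exact: (@prod_antimagic _ _ e1 e2 r1 r2 f1 f2 sg1 sg2 R1 R2 B1 B2
          (@P_mag _ e1 r2 f1 B1 M1 c2) (@P_mag _ e2 r1 f2 B2 M2 c1)).
Qed.
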